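(* Let $m\ge1$ and $A=(a_0,\ldots,a_m)$ real with $a_0,a_m\ne0$. For every $x\in[-1,1]$ and every $\varepsilon>0$ there exists $n_0$ such that for every $n>n_0$ the polynomial $T_{n,A}$ has a root $\xi$ with $|x-\xi|<\varepsilon$.
   Context: $T_k$ denotes the Chebyshev polynomial of the first kind, $T_k(\cos\theta)=\cos k\theta$. For $A=(a_0,\ldots,a_m)$ real with $a_0,a_m\ne0$ and $n\ge m$, $T_{n,A}(x)=\sum_{i=0}^m a_iT_{n-i}(x)$. *)

(* Defs.v *)
From Stdlib Require Import Reals.
Open Scope R_scope.

(* Chebyshev polynomial of the first kind, as a polynomial function on R,
   via the standard recurrence T_0 = 1, T_1 = x, T_{k+2} = 2x T_{k+1} - T_k
   (so that T_k(cos t) = cos (k t)). *)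
Fixpoint cheb (k : nat) (x : R) {struct k} : R :=
  match k with
  | O => 1
  | S k' =>
      match k' with
      | O => x
      | S k'' => 2 * x * cheb k' x - cheb k'' x
      end
  end.

(* T_{n,A}(x) = sum_{i=0}^m a_i T_{n-i}(x), with A = (a_0,...,a_m) given as
   a : nat -> R (only a 0, ..., a m matter). Meaningful for n >= m. *)
Definition chebA (a : nat -> R) (m n : nat) (x : R) : R :=
  sum_f_R0 (fun i => a i * cheb (n - i) x) m.

(* Main.v *)
Require Import Defs.
From Stdlib Require Import Reals Lra Lia.
Open Scope R_scope.

Definition Cs (a : nat -> R) (k : nat) (t : R) :=
  sum_f_R0 (fun i => a i * cos (INR i * t)) k.
Definition Sn (a : nat -> R) (k : nat) (t : R) :=
  sum_f_R0 (fun i => a i * sin (INR i * t)) k.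

Lemma cheb_cos2 (t : R) (k : nat) :
  cheb k (cos t) = cos (INR k * t) /\ cheb (S k) (cos t) = cos (INR (S k) * t).
Proof.
  induction k as [|k [H1 H2]].
  - simpl. split. replace (0*t) with 0 by ring. now rewrite cos_0.
    f_equal; ring.
  - split; [exact H2|].
    change (cheb (S (S k)) (cos t)) with (2 * cos t * cheb (S k) (cos t) - cheb k (cos t)).
    rewrite H1, H2.
    replace (INR (S (S k)) * t) with ((INR k * t + t) + t) by (rewrite !S_INR; ring).
    replace (INR (S k) * t) with (INR k * t + t) by (rewrite !S_INR; ring).
    replace (cos (INR k * t)) with (cos ((INR k * t + t) - t)) by (f_equal; ring).
    rewrite (cos_plus (INR k * t + t) t), (cos_minus (INR k * t + t) t). ring.
Qed.

Lemma cheb_cos (t : R) (k : nat) : cheb k (cos t) = cos (INR k * t).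
Proof. apply cheb_cos2. Qed.

Lemma chebA_cos a m n t : (m <= n)%nat ->
  chebA a m n (cos t) = Cs a m t * cos (INR n * t) + Sn a m t * sin (INR n * t).
Proof.
  intros Hmn. unfold chebA, Cs, Sn.
  assert (Hterm : forall i, (i <= n)%nat ->
    a i * cheb (n - i) (cos t) = a i * cos (INR i * t) * cos (INR n * t)
                                 + a i * sin (INR i * t) * sin (INR n * t)).
  { intros i Hi. rewrite cheb_cos, minus_INR by exact Hi.
    replace ((INR n - INR i) * t) with (INR n * t - INR i * t) by ring.
    rewrite cos_minus. ring. }
  induction m as [|m IH].
  - cbn [sum_f_R0]. rewrite Hterm by lia. ring.
  - cbn [sum_f_R0]. rewrite IH by lia. rewrite Hterm by lia. ring.
Qed.

Lemma cont_Cs a k : continuity (Cs a k).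
Proof.
  unfold Cs. induction k as [|k IH].
  - simpl. reg.
  - simpl. apply (continuity_plus _ (fun t => a (S k) * cos (INR (S k) * t))).
    exact IH. reg.
Qed.

Lemma cont_Sn a k : continuity (Sn a k).
Proof.
  unfold Sn. induction k as [|k IH].
  - simpl. reg.
  - simpl. apply (continuity_plus _ (fun t => a (S k) * sin (INR (S k) * t))).
    exact IH. reg.
Qed.

Lemma cont_g a m n : continuity (fun t => Cs a m t * cos (INR n * t) + Sn a m t * sin (INR n * t)).
Proof.
  apply (continuity_plus (fun t => Cs a m t * cos (INR n * t)) (fun t => Sn a m t * sin (INR n * t))).
  - apply (continuity_mult (Cs a m) (fun t => cos (INR n * t))). apply cont_Cs. reg.
  - apply (continuity_mult (Sn a m) (fun t => sin (INR n * t))). apply cont_Sn. reg.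
Qed.

Lemma cont_near f x0 e : continuity_pt f x0 -> 0 < e ->
  exists d, 0 < d /\ forall t, Rabs (t - x0) < d -> Rabs (f t - f x0) < e.
Proof.
  intros H He. destruct (H e He) as [d [Hd Hf]]. exists d; split; [exact Hd|].
  intros t Ht. destruct (Req_dec t x0) as [->|Hne].
  - rewrite Rminus_diag, Rabs_R0; exact He.
  - apply (Hf t). split. unfold D_x, no_cond; split; auto. exact Ht.
Qed.

Theorem theorem2p5 (m : nat) (a : nat -> R) :
  (1 <= m)%nat -> a 0%nat <> 0 -> a m <> 0 ->
  forall x : R, -1 <= x <= 1 ->
  forall eps : R, 0 < eps ->
  exists n0 : nat, forall n : nat, (n0 < n)%nat -> (m <= n)%nat ->
    exists xi : R, Rabs (x - xi) < eps /\ chebA a m n xi = 0.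
Proof.
  intros _ _ _ x Hx eps Heps.
  set (th := acos x).
  assert (Hth : cos th = x) by (apply cos_acos; exact Hx).
  set (C0 := Cs a m th). set (S0 := Sn a m th).
  destruct (Req_dec (C0 * C0 + S0 * S0) 0) as [HK0|HK0].
  { assert (HC : C0 = 0) by nra. assert (HS : S0 = 0) by nra.
    exists 0%nat. intros n _ Hmn. exists x. split.
    + rewrite Rminus_diag, Rabs_R0. exact Heps.
    + rewrite <- Hth, chebA_cos by exact Hmn. fold C0 S0. rewrite HC, HS. ring. }
  set (K := C0 * C0 + S0 * S0).
  assert (HK : 0 < K) by (unfold K in *; nra).
  set (R0 := sqrt K).
  assert (HR0 : 0 < R0) by (apply sqrt_lt_R0; exact HK).
  assert (HR0sq : R0 * R0 = K) by (apply sqrt_sqrt; lra).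
  destruct (cont_near (Cs a m) th (R0/4) (cont_Cs a m th)) as [d1 [Hd1 H1]]; [lra|].
  destruct (cont_near (Sn a m) th (R0/4) (cont_Sn a m th)) as [d2 [Hd2 H2]]; [lra|].
  destruct (cont_near cos th eps (continuity_cos th) Heps) as [d3 [Hd3 H3]].
  set (eta := Rmin d1 (Rmin d2 d3)).
  assert (Heta : 0 < eta) by (unfold eta; repeat apply Rmin_pos; assumption).
  assert (He1 : eta <= d1) by (unfold eta; apply Rmin_l).
  assert (He2 : eta <= d2) by (unfold eta; eapply Rle_trans; [apply Rmin_r|apply Rmin_l]).
  assert (He3 : eta <= d3) by (unfold eta; eapply Rle_trans; [apply Rmin_r|apply Rmin_r]).
  destruct (archimed_cor1 (eta / 6)) as [N [HN HN0]]; [lra|].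
  exists N. intros n Hn Hmn.
  assert (HNpos : 0 < INR N) by (apply lt_0_INR; lia).
  assert (HnN : INR N < INR n) by (apply lt_INR; lia).
  assert (Hnpos : 0 < INR n) by lra.
  assert (Hinv : / INR n < / INR N) by (apply Rinv_lt_contravar; nra).
  set (h := PI / INR n).
  assert (Hh0 : 0 < h) by (unfold h; apply Rdiv_lt_0_compat; [apply PI_RGT_0|exact Hnpos]).
  assert (Hh : 3 / 2 * h < eta).
  { unfold h, Rdiv. pose proof PI_4. pose proof PI_RGT_0.
    assert (PI * / INR n <= 4 * / INR n) by (apply Rmult_le_compat_r; [left; apply Rinv_0_lt_compat; lra| lra]).
    lra. }
  set (g := fun t => Cs a m t * cos (INR n * t) + Sn a m t * sin (INR n * t)).
  set (u := fun t => C0 * cos (INR n * t) + S0 * sin (INR n * t)).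
  assert (Hu1 : forall t, u (t + h) = - u t).
  { intros t. unfold u. replace (INR n * (t + h)) with (INR n * t + PI)
      by (unfold h; field; lra). rewrite neg_cos, neg_sin. ring. }
  assert (Hu2 : forall t, u t * u t + u (t + h / 2) * u (t + h / 2) = K).
  { intros t. unfold u. replace (INR n * (t + h / 2)) with (INR n * t + PI / 2)
      by (unfold h; field; lra). rewrite cos_plus, sin_plus, cos_PI2, sin_PI2.
    pose proof (sin2_cos2 (INR n * t)). unfold Rsqr in *. unfold K. nra. }
  assert (Herr : forall t, Rabs (t - th) < eta -> Rabs (g t - u t) < R0 / 2).
  { intros t Ht. specialize (H1 t ltac:(lra)). specialize (H2 t ltac:(lra)).
    fold C0 in H1. fold S0 in H2.
    unfold g, u.
    replace (Cs a m t * cos (INR n * t) + Sn a m t * sin (INR n * t) -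
      (C0 * cos (INR n * t) + S0 * sin (INR n * t))) with
      ((Cs a m t - C0) * cos (INR n * t) + (Sn a m t - S0) * sin (INR n * t)) by ring.
    eapply Rle_lt_trans; [apply Rabs_triang|]. rewrite !Rabs_mult.
    assert (Rabs (cos (INR n * t)) <= 1) by (apply Rabs_le; apply COS_bound).
    assert (Rabs (sin (INR n * t)) <= 1) by (apply Rabs_le; apply SIN_bound).
    pose proof (Rabs_pos (Cs a m t - C0)). pose proof (Rabs_pos (Sn a m t - S0)).
    nra. }
  assert (Hkey : forall tau, Rabs (tau - th) <= h / 2 -> u tau * u tau >= K / 2 ->
    exists xi : R, Rabs (x - xi) < eps /\ chebA a m n xi = 0).
  { intros tau Htau Hutau.
    assert (E1 : Rabs (g tau - u tau) < R0 / 2) by (apply Herr; lra).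
    assert (E2 : Rabs (g (tau + h) - u (tau + h)) < R0 / 2).
    { apply Herr. replace (tau + h - th) with ((tau - th) + h) by ring.
      eapply Rle_lt_trans; [apply Rabs_triang|]. rewrite (Rabs_right h) by lra. lra. }
    rewrite Hu1 in E2.
    apply Rabs_def2 in E1. apply Rabs_def2 in E2.
    assert (Hbig : u tau > R0 / 2 \/ u tau < - (R0 / 2)).
    { destruct (Rlt_or_le (R0/2) (u tau)); [left; lra|].
      destruct (Rlt_or_le (u tau) (-(R0/2))); [right; lra|]. exfalso. nra. }
    assert (Hprod : g tau * g (tau + h) <= 0).
    { destruct Hbig.
      - assert (0 < g tau) by lra. assert (g (tau + h) < 0) by lra. nra.
      - assert (g tau < 0) by lra. assert (0 < g (tau + h)) by lra. nra. }
    destruct (IVT_cor g tau (tau + h) (cont_g a m n) ltac:(lra) Hprod) as [z [Hz Hgz]].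
    exists (cos z). split.
    - rewrite <- Hth, Rabs_minus_sym. apply H3.
      assert (Hb : - (h/2) <= tau - th <= h / 2).
      { destruct (Rcase_abs (tau - th)).
        - rewrite Rabs_left in Htau by assumption. lra.
        - rewrite Rabs_right in Htau by assumption. lra. }
      apply Rabs_def1; lra.
    - rewrite chebA_cos by exact Hmn. exact Hgz. }
  destruct (Rle_lt_dec (K / 2) (u th * u th)) as [Hc|Hc].
  - apply (Hkey th). rewrite Rminus_diag, Rabs_R0; lra. lra.
  - apply (Hkey (th + h / 2)).
    + replace (th + h / 2 - th) with (h / 2) by ring. rewrite Rabs_right; lra.
    + pose proof (Hu2 th). lra.
Qed.
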